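(* Let $\alpha,\gamma\in(0,1)$ and let $S:[0,1)^2\to[0,1)^2$ be $$S(x,y)=\begin{cases}(x+\alpha \bmod 1,\ y) & \text{if } x\in[0,1-\alpha),\\ (x+\alpha\bmod 1,\ y+\gamma\bmod 1) & \text{if } x\in[1-\alpha,1).\end{cases}$$ If the three numbers $1,\alpha,\alpha\gamma$ are linearly independent over $\mathbb Q$, then for every $(x_0,y_0)\in[0,1)^2$ the set $\{S^n(x_0,y_0):n\in\mathbb N\}$ is dense in $[0,1)^2$. *)

(* Defs.v *)
From Stdlib Require Import Reals QArith Qreals.
Open Scope R_scope.

Definition mod1 (x : R) : R := x - IZR (Int_part x).

(* the skew map S on [0,1)^2 (defined on all of R*R; only its values on
   [0,1)^2 matter) *)
Definition S_map (alpha gamma : R) (p : R * R) : R * R :=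
  let (x, y) := p in
  if Rlt_dec x (1 - alpha) then (mod1 (x + alpha), y)
  else (mod1 (x + alpha), mod1 (y + gamma)).

Definition Q_lin_indep3 (a b : R) : Prop :=
  forall p q r : Q, Q2R p + Q2R q * a + Q2R r * b = 0 ->
    p == 0%Q /\ q == 0%Q /\ r == 0%Q.

Definition in_unit_sq (p : R * R) : Prop :=
  0 <= fst p < 1 /\ 0 <= snd p < 1.

Definition dense_in_unit_sq (A : R * R -> Prop) : Prop :=
  forall a b eps, in_unit_sq (a, b) -> 0 < eps ->
    exists p, A p /\ Rabs (fst p - a) < eps /\ Rabs (snd p - b) < eps.

(* Main.v *)
Require Import Defs.
From Stdlib Require Import Reals QArith Qreals Lra Lia Classical.
Open Scope R_scope.

Lemma fl_bounds r : IZR (Int_part r) <= r < IZR (Int_part r) + 1.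
Proof. destruct (base_Int_part r); lra. Qed.

Lemma fl_unique r z : IZR z <= r < IZR z + 1 -> Int_part r = z.
Proof. intros H; symmetry; apply Int_part_spec; lra. Qed.

Lemma mod1_bounds r : 0 <= mod1 r < 1.
Proof. unfold mod1; destruct (fl_bounds r); lra. Qed.

Lemma mod1_eq r z : IZR z <= r < IZR z + 1 -> mod1 r = r - IZR z.
Proof. intros H; unfold mod1; rewrite (fl_unique r z H); reflexivity. Qed.

Lemma mod1_shift c k : mod1 (c + IZR k) = mod1 c.
Proof.
  destruct (fl_bounds c).
  rewrite (mod1_eq _ (Int_part c + k)). unfold mod1. rewrite plus_IZR; ring.
  rewrite plus_IZR; lra.
Qed.

Lemma mod1_mod1 a b : mod1 (mod1 a + b) = mod1 (a + b).
Proof.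
  unfold mod1 at 2. replace (a - IZR (Int_part a) + b) with (a + b + IZR (- Int_part a))
    by (rewrite opp_IZR; ring).
  apply mod1_shift.
Qed.

Lemma orbit_formula alpha gamma x0 y0 (n : nat) :
  0 < alpha < 1 -> 0 <= x0 < 1 -> 0 <= y0 < 1 ->
  Nat.iter n (S_map alpha gamma) (x0, y0) =
  (mod1 (x0 + INR n * alpha),
   mod1 (y0 + gamma * IZR (Int_part (x0 + INR n * alpha)))).
Proof.
  intros Ha Hx Hy. induction n as [|n IH].
  - simpl. rewrite (fl_unique _ 0) by (simpl; lra). rewrite (mod1_eq _ 0) by (simpl; lra).
    f_equal; [simpl; ring|]. simpl. rewrite Rmult_0_r, Rplus_0_r. rewrite (mod1_eq _ 0) by (simpl; lra). simpl; ring.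
  - change (Nat.iter (S n) (S_map alpha gamma) (x0, y0)) with (S_map alpha gamma (Nat.iter n (S_map alpha gamma) (x0, y0))). rewrite IH. clear IH.
    set (m := Int_part (x0 + INR n * alpha)).
    assert (Hm := fl_bounds (x0 + INR n * alpha)). fold m in Hm.
    rewrite (mod1_eq _ m) by lra.
    unfold S_map. rewrite S_INR.
    destruct (Rlt_dec (x0 + INR n * alpha - IZR m) (1 - alpha)) as [Hl|Hl].
    + assert (E : Int_part (x0 + (INR n + 1) * alpha) = m) by (apply fl_unique; lra).
      rewrite E. f_equal. rewrite (mod1_eq _ 0) by (simpl; lra).
      rewrite (mod1_eq _ m) by lra. simpl; ring.
    + assert (E : Int_part (x0 + (INR n + 1) * alpha) = (m + 1)%Z)
        by (apply fl_unique; rewrite plus_IZR; simpl; lra).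
      rewrite E. f_equal.
      * rewrite (mod1_eq _ 1) by (simpl; lra). rewrite (mod1_eq _ (m+1)) by (rewrite plus_IZR; simpl; lra).
        rewrite plus_IZR; simpl; ring.
      * rewrite mod1_mod1. rewrite plus_IZR. f_equal. simpl; ring.
Qed.

Lemma php n : forall (f : nat -> nat), (forall i, (i <= n)%nat -> (f i < n)%nat) ->
  exists i j, (i < j <= n)%nat /\ f i = f j.
Proof.
  induction n as [|n IH]; intros f Hf.
  - specialize (Hf 0%nat (le_n 0)); lia.
  - destruct (classic (exists i, (i <= n)%nat /\ f i = f (S n))) as [[i [Hi E]]|Hno].
    + exists i, (S n); split; [lia|exact E].
    + set (g := fun i => if Nat.ltb (f i) (f (S n)) then f i else (f i - 1)%nat).
      destruct (IH g) as [i [j [Hij E]]].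
      * intros i Hi. unfold g. assert (f i <> f (S n)) by (intro; apply Hno; exists i; auto).
        pose proof (Hf i ltac:(lia)). pose proof (Hf (S n) ltac:(lia)).
        destruct (Nat.ltb_spec (f i) (f (S n))); lia.
      * exists i, j; split; [lia|].
        assert (f i <> f (S n)) by (intro; apply Hno; exists i; split; auto; lia).
        assert (f j <> f (S n)) by (intro; apply Hno; exists j; split; auto; lia).
        unfold g in E.
        destruct (Nat.ltb_spec (f i) (f (S n))); destruct (Nat.ltb_spec (f j) (f (S n))); lia.
Qed.

Lemma box_bounds (K : nat) x : (1 <= K)%nat ->
  (0 <= Int_part (INR K * mod1 x))%Z /\ (Int_part (INR K * mod1 x) < Z.of_nat K)%Z.
Proof.
  intros HK. destruct (mod1_bounds x). destruct (fl_bounds (INR K * mod1 x)).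
  assert (1 <= INR K) by (apply (le_INR 1); auto).
  split.
  - assert (Hg : -1 < IZR (Int_part (INR K * mod1 x))) by nra.
    change (-1) with (IZR (-1)) in Hg. apply lt_IZR in Hg. lia.
  - apply lt_IZR. rewrite <- INR_IZR_INZ. nra.
Qed.

Lemma close (K : nat) e m1 m2 : 0 < e -> / e < INR K ->
  Int_part (INR K * m1) = Int_part (INR K * m2) -> Rabs (m1 - m2) < e.
Proof.
  intros He HK E. destruct (fl_bounds (INR K * m1)). destruct (fl_bounds (INR K * m2)).
  rewrite E in *.
  assert (Ke : e * INR K > 1).
  { apply (Rmult_lt_compat_l e) in HK; auto. rewrite Rinv_r in HK; lra. }
  assert (0 < INR K) by (apply (Rlt_trans _ (/ e)); auto; apply Rinv_0_lt_compat; auto).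
  apply Rabs_def1; nra.
Qed.

Lemma dirichlet a b e : 0 < e -> exists d p q : Z, (1 <= d)%Z /\
  Rabs (IZR d * a - IZR p) < e /\ Rabs (IZR d * b - IZR q) < e.
Proof.
  intros He.
  destruct (archimed (/ e)) as [Hu _].
  assert (Hpos : (0 < up (/ e))%Z).
  { apply lt_IZR. apply (Rlt_trans _ (/ e)); auto. apply Rinv_0_lt_compat; auto. }
  set (K := Z.to_nat (up (/ e))).
  assert (HKR : INR K = IZR (up (/ e))) by (unfold K; rewrite INR_IZR_INZ, Znat.Z2Nat.id; auto; lia).
  assert (HK1 : (1 <= K)%nat) by (unfold K; lia).
  assert (HKe : / e < INR K) by (rewrite HKR; auto).
  set (bx := fun j => Z.to_nat (Int_part (INR K * mod1 (INR j * a)))).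
  set (bY := fun j => Z.to_nat (Int_part (INR K * mod1 (INR j * b)))).
  destruct (php (K * K) (fun j => K * bx j + bY j)%nat) as [i [j [Hij E]]].
  { intros i _. assert (bx i < K)%nat.
    { unfold bx. destruct (box_bounds K (INR i * a) HK1); lia. }
    assert (bY i < K)%nat.
    { unfold bY. destruct (box_bounds K (INR i * b) HK1); lia. }
    nia. }
  assert (Ex : bx i = bx j /\ bY i = bY j).
  { assert (bY i < K)%nat.
    { unfold bY. destruct (box_bounds K (INR i * b) HK1); lia. }
    assert (bY j < K)%nat.
    { unfold bY. destruct (box_bounds K (INR j * b) HK1); lia. }
    destruct (Nat.lt_trichotomy (bx i) (bx j)) as [Hc|[Hc|Hc]]; [nia| |nia].
    split; auto. nia. }
  destruct Ex as [Ex Ey]. unfold bx, bY in Ex, Ey.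
  destruct (box_bounds K (INR i * a) HK1). destruct (box_bounds K (INR j * a) HK1).
  destruct (box_bounds K (INR i * b) HK1). destruct (box_bounds K (INR j * b) HK1).
  apply Znat.Z2Nat.inj in Ex; try lia. apply Znat.Z2Nat.inj in Ey; try lia.
  exists (Z.of_nat j - Z.of_nat i)%Z,
    (Int_part (INR j * a) - Int_part (INR i * a))%Z,
    (Int_part (INR j * b) - Int_part (INR i * b))%Z.
  split; [lia|].
  rewrite !minus_IZR, <- !INR_IZR_INZ.
  split.
  - replace ((INR j - INR i) * a - (IZR (Int_part (INR j * a)) - IZR (Int_part (INR i * a))))
      with (mod1 (INR j * a) - mod1 (INR i * a)) by (unfold mod1; ring).
    apply (close K); auto.
  - replace ((INR j - INR i) * b - (IZR (Int_part (INR j * b)) - IZR (Int_part (INR i * b))))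
      with (mod1 (INR j * b) - mod1 (INR i * b)) by (unfold mod1; ring).
    apply (close K); auto.
Qed.

Lemma indep_Z a b : Q_lin_indep3 a b -> forall i j k : Z,
  IZR i + IZR j * a + IZR k * b = 0 -> i = 0%Z /\ j = 0%Z /\ k = 0%Z.
Proof.
  intros H i j k E.
  assert (Q : forall z, Q2R (inject_Z z) = IZR z) by (intro z; unfold Q2R; simpl; field).
  destruct (H (inject_Z i) (inject_Z j) (inject_Z k)) as [A [B C]].
  - rewrite !Q; exact E.
  - unfold Qeq in *; simpl in *. lia.
Qed.

Lemma irr_small B W d : B <> 0 -> 0 < d ->
  (forall m k : Z, IZR m * W = IZR k * B -> m = 0%Z) ->
  exists m k : Z, 0 < Rabs (IZR m * W - IZR k * B) < d.
Proof.
  intros HB Hd Hirr.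
  assert (HaB : 0 < Rabs B) by (apply Rabs_pos_lt; auto).
  destruct (dirichlet (W / B) 0 (d / Rabs B)) as [m [k [q [Hm [H1 _]]]]].
  { apply Rdiv_lt_0_compat; auto. }
  exists m, k. split.
  - apply Rabs_pos_lt. intro E. assert (IZR m * W = IZR k * B) by lra.
    apply Hirr in H. lia.
  - replace (IZR m * W - IZR k * B) with ((IZR m * (W / B) - IZR k) * B) by (field; auto).
    rewrite Rabs_mult.
    apply (Rmult_lt_compat_r (Rabs B)) in H1; auto.
    replace (d / Rabs B * Rabs B) with d in H1 by (field; lra). exact H1.
Qed.

Lemma Lreduce D Lt : D <> 0 -> exists l : Z, Rabs (Lt - IZR l * D) < Rabs D.
Proof.
  intros HD. exists (Int_part (Lt / D)). destruct (fl_bounds (Lt / D)).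
  replace (Lt - IZR (Int_part (Lt / D)) * D) with ((Lt / D - IZR (Int_part (Lt / D))) * D)
    by (field; auto).
  rewrite Rabs_mult. rewrite (Rabs_right (_ - _)) by lra.
  assert (0 < Rabs D) by (apply Rabs_pos_lt; auto). nra.
Qed.

Lemma reduce u1 u2 z1 z2 e : 0 < e <= 1 -> Rabs u1 < e -> Rabs u2 < e ->
  0 < u1 * u1 + u2 * u2 -> Rabs (u1 * z2 - u2 * z1) < e * (u1 * u1 + u2 * u2) ->
  exists K : Z, Rabs (z1 - IZR K * u1) < 2 * e /\ Rabs (z2 - IZR K * u2) < 2 * e.
Proof.
  intros He H1 H2 HN HL.
  set (N := u1 * u1 + u2 * u2) in *.
  set (s := (z1 * u1 + z2 * u2) / N).
  exists (Int_part s). destruct (fl_bounds s).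
  set (s' := s - IZR (Int_part s)).
  set (c := (u1 * z2 - u2 * z1) / N).
  assert (Hc : Rabs c < e).
  { unfold c. unfold Rdiv. rewrite Rabs_mult, (Rabs_right (/ N)) by (left; apply Rinv_0_lt_compat; auto).
    apply (Rmult_lt_compat_r (/ N)) in HL; [|apply Rinv_0_lt_compat; auto].
    replace (e * N * / N) with e in HL by (field; lra). exact HL. }
  assert (Hs : 0 <= s' < 1) by (unfold s'; lra).
  assert (E1 : z1 - IZR (Int_part s) * u1 = s' * u1 - c * u2) by (unfold s', c, s; generalize (IZR (Int_part ((z1 * u1 + z2 * u2) / N))); intro I; unfold N; field; unfold N in HN; lra).
  assert (E2 : z2 - IZR (Int_part s) * u2 = s' * u2 + c * u1) by (unfold s', c, s; generalize (IZR (Int_part ((z1 * u1 + z2 * u2) / N))); intro I; unfold N; field; unfold N in HN; lra).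
  assert (B : forall v w, Rabs v < e -> Rabs w < e -> Rabs (s' * v) < e /\ Rabs (c * w) < e).
  { intros v w Hv Hw. rewrite !Rabs_mult. rewrite (Rabs_right s') by lra.
    split.
    - destruct (Rle_lt_or_eq_dec 0 s'); [lra| |].
      + pose proof (Rabs_pos v). nra.
      + rewrite <- e0. pose proof (Rabs_pos v). nra.
    - pose proof (Rabs_pos c). pose proof (Rabs_pos w). nra. }
  rewrite E1, E2. destruct (B u1 u2 H1 H2). destruct (B u2 u1 H2 H1).
  split.
  - unfold Rminus. eapply Rle_lt_trans; [apply Rabs_triang|]. rewrite Rabs_Ropp. lra.
  - eapply Rle_lt_trans; [apply Rabs_triang|]. lra.
Qed.

Lemma density_Z a b :
  (forall i j k : Z, IZR i + IZR j * a + IZR k * b = 0 -> i = 0%Z /\ j = 0%Z /\ k = 0%Z) ->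
  forall t1 t2 eps, 0 < eps -> exists n P Q : Z,
    Rabs (IZR n * a - IZR P - t1) < eps /\ Rabs (IZR n * b - IZR Q - t2) < eps.
Proof.
  intros Hind t1 t2 eps Heps.
  set (e := Rmin eps 1 / 2).
  assert (He : 0 < e <= 1) by (unfold e; unfold Rmin; destruct (Rle_dec eps 1); lra).
  assert (He2 : 2 * e <= eps) by (unfold e; unfold Rmin; destruct (Rle_dec eps 1); lra).
  destruct (dirichlet a b e) as [d [p [q [Hd [Hu1 Hu2]]]]]; [lra|].
  set (u1 := IZR d * a - IZR p) in *. set (u2 := IZR d * b - IZR q) in *.
  assert (Hu1nz : u1 <> 0).
  { intro E. destruct (Hind (-p)%Z d 0%Z) as [_ [? _]]; [|lia].
    rewrite opp_IZR. unfold u1 in E. simpl. lra. }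
  assert (HN : 0 < u1 * u1 + u2 * u2) by (assert (0 < u1 * u1) by (apply Rsqr_pos_lt in Hu1nz; exact Hu1nz); nra).
  set (N := u1 * u1 + u2 * u2) in *.
  set (delta := e * N).
  assert (Hdelta : 0 < delta) by (unfold delta; nra).
  assert (Hh : exists m P0 Q0 : Z,
    0 < Rabs (u1 * (IZR m * b - IZR Q0) - u2 * (IZR m * a - IZR P0)) < delta).
  { destruct (Z.eq_dec p 0) as [Hp|Hp].
    - destruct (irr_small u1 (- u2) delta Hu1nz Hdelta) as [m [k Hmk]].
      + intros m k E. unfold u1, u2 in E. subst p.
        destruct (Hind (m * q)%Z (- (k * d))%Z (- (m * d))%Z) as [_ [_ ?]].
        * rewrite !mult_IZR, !opp_IZR, !mult_IZR. simpl in E. lra.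
        * nia.
      + exists 0%Z, (- m)%Z, k.
        replace (u1 * (IZR 0 * b - IZR k) - u2 * (IZR 0 * a - IZR (- m)))
          with (IZR m * - u2 - IZR k * u1) by (rewrite opp_IZR; simpl; ring).
        exact Hmk.
    - destruct (irr_small u1 (IZR q * a - IZR p * b) delta Hu1nz Hdelta) as [m [k Hmk]].
      + intros m k E. unfold u1 in E.
        destruct (Hind (k * p)%Z (m * q - k * d)%Z (- (m * p))%Z) as [_ [_ ?]].
        * rewrite !minus_IZR, !opp_IZR, !mult_IZR. lra.
        * nia.
      + exists m, 0%Z, k.
        replace (u1 * (IZR m * b - IZR k) - u2 * (IZR m * a - IZR 0))
          with (IZR m * (IZR q * a - IZR p * b) - IZR k * u1) by (unfold u1, u2; simpl; ring).
        exact Hmk. }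
  destruct Hh as [m [P0 [Q0 [HD1 HD2]]]].
  set (h1 := IZR m * a - IZR P0) in *. set (h2 := IZR m * b - IZR Q0) in *.
  set (D := u1 * h2 - u2 * h1) in *.
  assert (HDnz : D <> 0) by (intro E; rewrite E, Rabs_R0 in HD1; lra).
  destruct (Lreduce D (u1 * t2 - u2 * t1) HDnz) as [l Hl].
  set (z1 := t1 - IZR l * h1). set (z2 := t2 - IZR l * h2).
  destruct (reduce u1 u2 z1 z2 e He Hu1 Hu2 HN) as [K [HK1 HK2]].
  { replace (u1 * z2 - u2 * z1) with (u1 * t2 - u2 * t1 - IZR l * D) by (unfold z1, z2, D; ring).
    exact (Rlt_trans _ _ _ Hl HD2). }
  exists (l * m + K * d)%Z, (l * P0 + K * p)%Z, (l * Q0 + K * q)%Z.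
  rewrite !plus_IZR, !mult_IZR.
  split.
  - replace ((IZR l * IZR m + IZR K * IZR d) * a - (IZR l * IZR P0 + IZR K * IZR p) - t1)
      with (- (z1 - IZR K * u1)) by (unfold z1, h1, u1; ring).
    rewrite Rabs_Ropp; lra.
  - replace ((IZR l * IZR m + IZR K * IZR d) * b - (IZR l * IZR Q0 + IZR K * IZR q) - t2)
      with (- (z2 - IZR K * u2)) by (unfold z2, h2, u2; ring).
    rewrite Rabs_Ropp; lra.
Qed.

Lemma density_N a b :
  (forall i j k : Z, IZR i + IZR j * a + IZR k * b = 0 -> i = 0%Z /\ j = 0%Z /\ k = 0%Z) ->
  forall t1 t2 eps, 0 < eps -> exists (n : nat) (P Q : Z),
    Rabs (INR n * a - IZR P - t1) < eps /\ Rabs (INR n * b - IZR Q - t2) < eps.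
Proof.
  intros Hind t1 t2 eps Heps.
  destruct (density_Z a b Hind t1 t2 (eps / 2)) as [n [P [Q [H1 H2]]]]; [lra|].
  set (s := (Z.abs n + 1)%Z).
  destruct (dirichlet (IZR s * a) (IZR s * b) (eps / 2)) as [d [p [q [Hd [E1 E2]]]]]; [lra|].
  assert (Hpos : (0 <= n + s * d)%Z) by (unfold s; nia).
  exists (Z.to_nat (n + s * d)), (P + p)%Z, (Q + q)%Z.
  rewrite INR_IZR_INZ, Znat.Z2Nat.id by exact Hpos.
  rewrite !plus_IZR, !mult_IZR.
  split.
  - replace ((IZR n + IZR s * IZR d) * a - (IZR P + IZR p) - t1)
      with ((IZR n * a - IZR P - t1) + (IZR d * (IZR s * a) - IZR p)) by ring.
    eapply Rle_lt_trans; [apply Rabs_triang|]. lra.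
  - replace ((IZR n + IZR s * IZR d) * b - (IZR Q + IZR q) - t2)
      with ((IZR n * b - IZR Q - t2) + (IZR d * (IZR s * b) - IZR q)) by ring.
    eapply Rle_lt_trans; [apply Rabs_triang|]. lra.
Qed.

Theorem proposition2 (alpha gamma : R) :
  0 < alpha < 1 -> 0 < gamma < 1 ->
  Q_lin_indep3 alpha (alpha * gamma) ->
  forall x0 y0 : R, in_unit_sq (x0, y0) ->
  dense_in_unit_sq (fun p => exists n : nat, p = Nat.iter n (S_map alpha gamma) (x0, y0)).
Proof.
  intros Ha Hg Hind x0 y0 [Hx Hy] a b eps [Ha' Hb'] Heps. simpl in *.
  set (eta := Rmin eps (Rmin (1 - a) (1 - b)) / 5).
  assert (Heta : 0 < eta /\ 5 * eta <= eps /\ 5 * eta <= 1 - a /\ 5 * eta <= 1 - b).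
  { unfold eta, Rmin. destruct (Rle_dec (1 - a) (1 - b)); destruct (Rle_dec eps _); lra. }
  destruct (density_N alpha (alpha * gamma) (indep_Z _ _ Hind)
    (a + eta - x0) (b + 2 * eta - y0 - gamma * x0 + gamma * (a + eta)) eta)
    as [n [P [Q [H1 H2]]]]; [lra|].
  exists (Nat.iter n (S_map alpha gamma) (x0, y0)). split; [exists n; reflexivity|].
  rewrite orbit_formula by lra. simpl.
  apply Rabs_def2 in H1. apply Rabs_def2 in H2.
  set (X := x0 + INR n * alpha - IZR P).
  assert (HX : a < X < a + 2 * eta) by (unfold X; lra).
  assert (EP : Int_part (x0 + INR n * alpha) = P) by (apply fl_unique; unfold X in HX; lra).
  rewrite EP. rewrite (mod1_eq _ P) by (unfold X in HX; lra). fold X.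
  set (V := y0 + gamma * x0 + (INR n * (alpha * gamma) - IZR Q) - gamma * X).
  assert (EV : y0 + gamma * IZR P = V + IZR Q) by (unfold V, X; ring).
  rewrite EV, mod1_shift.
  assert (HgX : Rabs (gamma * (X - a - eta)) < eta).
  { rewrite Rabs_mult, Rabs_right by lra.
    assert (Rabs (X - a - eta) < eta) by (apply Rabs_def1; lra).
    pose proof (Rabs_pos (X - a - eta)). nra. }
  apply Rabs_def2 in HgX.
  assert (HV : b < V < b + 4 * eta) by (unfold V; lra).
  rewrite (mod1_eq _ 0) by (simpl; lra).
  split; apply Rabs_def1; simpl; lra.
Qed.
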